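(* Let $(X,T)$ be a topological dynamical system and $\pi:(X,T)\to(X_{eq},T_{eq})$ the factor map onto its maximal equicontinuous factor. If $(X,T)$ is block $\mathcal{F}_t$-sensitive then $\pi$ is not proximal.
   Context: A topological dynamical system $(X,T)$: compact metric space $(X,d)$, $T$ continuous surjective. $(X,T)$ is block $\mathcal{F}_t$-sensitive if there is $\delta>0$ such that for each $x\in X$, every neighborhood $U$ of $x$ and every $l\in\mathbb{N}$ there is $y_l\in U$ such that $\{n\in\mathbb{Z}_+: d(T^nx,T^ny_l)>\delta\}$ contains $\{m+1,\dots,m+l\}$ for some $m\in\mathbb{N}$. $X_{eq}$ is the maximal equicontinuous factor (every equicontinuous factor of $(X,T)$ is a factor of it). A pair $(x,y)$ is proximal if $\inf_n d(T^nx,T^ny)=0$; a factor map $\pi$ is proximal if every pair $(x,y)$ with $\pi(x)=\pi(y)$ is proximal. *)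

(* Defs.v *)
From HB Require Import structures.
From mathcomp Require Import all_boot all_order all_algebra.
From mathcomp Require Import all_classical all_reals all_analysis.
Set Implicit Arguments. Unset Strict Implicit. Unset Printing Implicit Defensive.
Import Order.TTheory GRing.Theory Num.Theory.
Local Open Scope classical_set_scope.
Local Open Scope ring_scope.

Section Dyn.
Context {R : realType}.

Definition TDS (X : metricType R) (T : X -> X) : Prop :=
  compact [set: X] /\ continuous T /\ (forall y : X, exists x, T x = y).

Definition factor_map (X Y : metricType R) (T : X -> X) (S : Y -> Y)
    (pi : X -> Y) : Prop :=
  continuous pi /\ (forall y : Y, exists x, pi x = y) /\
  (forall x, pi (T x) = S (pi x)).

Definition equicontinuous_system (Y : metricType R) (S : Y -> Y) : Prop :=
  forall e : R, 0 < e -> exists2 d : R, 0 < d &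
    forall x y : Y, mdist x y < d -> forall n : nat,
      mdist (iter n S x) (iter n S y) < e.

Definition max_equicontinuous_factor (X Y : metricType R) (T : X -> X)
    (S : Y -> Y) (pi : X -> Y) : Prop :=
  TDS S /\ equicontinuous_system S /\ factor_map T S pi /\
  forall (Z : metricType R) (U : Z -> Z) (phi : X -> Z),
    TDS U -> equicontinuous_system U -> factor_map T U phi ->
    exists psi : Y -> Z, factor_map S U psi /\ forall x, phi x = psi (pi x).

(* block F_t-sensitivity (N = {1,2,...}, Z_+ = {0,1,2,...}) *)
Definition block_Ft_sensitive (X : metricType R) (T : X -> X) : Prop :=
  exists2 delta : R, 0 < delta &
    forall (x : X) (U : set X), nbhs x U -> forall l : nat, (0 < l)%N ->
      exists y : X, U y /\
        exists m : nat, (0 < m)%N /\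
          forall n : nat, (m < n <= m + l)%N ->
            delta < mdist (iter n T x) (iter n T y).

Definition proximal_pair (X : metricType R) (T : X -> X) (x y : X) : Prop :=
  forall e : R, 0 < e -> exists n : nat, mdist (iter n T x) (iter n T y) < e.

Definition proximal_map (X Y : metricType R) (T : X -> X) (pi : X -> Y) : Prop :=
  forall x y : X, pi x = pi y -> proximal_pair T x y.

End Dyn.

(* Main.v *)
Require Import Defs.
From mathcomp Require Import all_boot all_order all_algebra.
From mathcomp Require Import all_classical all_reals all_analysis.
From mathcomp Require Import lra zify.
Import Order.TTheory GRing.Theory Num.Theory.
Local Open Scope classical_set_scope.
Local Open Scope ring_scope.

Theorem proposition4p2 (R : realType) (X Y : metricType R)
    (T : X -> X) (S : Y -> Y) (pi : X -> Y) :
  (exists x : X, True) ->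
  TDS T ->
  max_equicontinuous_factor T S pi ->
  block_Ft_sensitive T ->
  ~ proximal_map T pi.
Proof.
move=> [x _] [cX [cT _]] [_ [eqS [[cpi [_ piT]] _]]] [delta d0 Hs] Hprox.
have H1 : forall k : nat, exists p : X * nat, ball x (k.+1%:R^-1) p.1 /\
   (0 < p.2)%N /\ forall n, (p.2 < n <= p.2 + k.+1)%N ->
      delta < mdist (iter n T x) (iter n T p.1).
  move=> k.
  have [|y [Uy [m [m0 Hm]]]] := Hs x _ (nbhsx_ballx x (k.+1%:R^-1) _) k.+1 isT.
    by rewrite invr_gt0 ltr0n.
  by exists (y, m).
case: (choice H1) => f Hf.
pose u k := (iter ((f k).2.+1) T x, iter ((f k).2.+1) T (f k).1).
have cXX : compact [set: X * X] by rewrite -setXTT; apply: compact_setX.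
have [[a b] [_ clab]] := cXX (u @ \oo) _ filterT.
have meet : forall K (B : set (X * X)), nbhs (a, b) B ->
    exists k, (K <= k)%N /\ B (u k).
  move=> K B nB.
  have : [set u k | k in [set k | (K <= k)%N]] `&` B !=set0.
    apply: clab nB.
    by exists K => // k Kk; exists k.
  by move=> [z [[k Kk <-] Bz]]; exists k.
have nprod : forall (A B : set X), nbhs a A -> nbhs b B -> nbhs (a, b) (A `*` B).
  by move=> A B nA nB; exists (A, B).
have citer : forall j, continuous (iter j T).
  elim=> [|j IH] z; first exact: cvg_id.
  exact: (continuous_comp (IH z) (cT _)).
have piTn : forall n z, pi (iter n T z) = iter n S (pi z).
  by elim=> //= n IH z; rewrite piT IH.
have sep : forall j, delta <= mdist (iter j T a) (iter j T b).
  move=> j; rewrite leNgt; apply/negP => hlt.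
  pose c := delta - mdist (iter j T a) (iter j T b).
  have c0 : 0 < c / 2 by rewrite /c; lra.
  have [k [jk [Bk1 Bk2]]] := meet j _ (nprod _ _
     (citer j a _ (nbhsx_ballx _ _ c0)) (citer j b _ (nbhsx_ballx _ _ c0))).
  move: Bk1 Bk2; rewrite /= !ballEmdist => Bk1 Bk2.
  have h : ((f k).2 < j + (f k).2.+1 <= (f k).2 + k.+1)%N.
    by apply/andP; split; lia.
  have := (Hf k).2.2 (j + (f k).2.+1) h.
  rewrite iterD [iter (j + _) _ _]iterD => H.
  change (iter (f k).2.+1 T x) with (u k).1 in H.
  change (iter (f k).2.+1 T (f k).1) with (u k).2 in H.
  have t1 := metric_triangle (iter j T (u k).1) (iter j T a) (iter j T (u k).2).
  have t2 := metric_triangle (iter j T a) (iter j T b) (iter j T (u k).2).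
  rewrite (metric_sym (iter j T (u k).1) (iter j T a)) in t1.
  have B1 : mdist (iter j T a) (iter j T (u k).1) < c / 2 := Bk1.
  have B2 : mdist (iter j T b) (iter j T (u k).2) < c / 2 := Bk2.
  rewrite /c in c0 B1 B2; lra.
have piab : pi a = pi b.
  apply: mdist_positivity; apply/eqP; rewrite eq_le mdist_ge0 andbT leNgt.
  apply/negP => cpos.
  pose c := mdist (pi a) (pi b).
  have c3 : 0 < c / 3 by rewrite /c; lra.
  have [d dpos Hd] := eqS (c / 3) c3.
  have /nbhs_ballP [r r0 Hr] := cpi x (ball (pi x) d) (nbhsx_ballx _ _ dpos).
  pose K := Num.Def.trunc (r^-1).
  have [k [Kk [Bk1 Bk2]]] := meet K _ (nprod _ _
     (cpi a _ (nbhsx_ballx _ _ c3)) (cpi b _ (nbhsx_ballx _ _ c3))).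
  move: Bk1 Bk2; rewrite /= !ballEmdist => Bk1 Bk2.
  have B1 : mdist (pi a) (pi (u k).1) < c / 3 := Bk1.
  have B2 : mdist (pi b) (pi (u k).2) < c / 3 := Bk2.
  have hx : ball x r (f k).1.
    apply: (le_ball _ (Hf k).1).
    rewrite -[r]invrK lef_pV2 ?posrE ?invr_gt0 ?ltr0n //.
    apply/ltW; apply: (lt_le_trans (truncnS_gt _)).
    by rewrite ler_nat ltnS.
  have := Hr _ hx; rewrite /= ballEmdist /= => hd.
  have := Hd _ _ hd ((f k).2.+1); rewrite -!piTn => H.
  change (iter (f k).2.+1 T x) with (u k).1 in H.
  change (iter (f k).2.+1 T (f k).1) with (u k).2 in H.
  have t1 := metric_triangle (pi a) (pi (u k).1) (pi b).
  have t2 := metric_triangle (pi (u k).1) (pi (u k).2) (pi b).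
  rewrite (metric_sym (pi b) (pi (u k).2)) in B2.
  rewrite /c in c3 B1 B2 t1 H.
  lra.
have [n Hn] := Hprox a b piab delta d0.
by have := sep n; rewrite leNgt Hn.
Qed.
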